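(* Let $k\ge1$ and let $p=(p_1,\dots,p_n)$ be a parking function. Then the permutation $\pi(p)$ avoids the pattern $12\cdots(k+1)$ if and only if the word $p_1\cdots p_n$ contains no weakly increasing subsequence of length $k+1$, i.e. there are no indices $i_1<\dots<i_{k+1}$ with $p_{i_1}\le p_{i_2}\le\dots\le p_{i_{k+1}}$.
   Context: $[n]=\{1,\dots,n\}$. A tuple $p\in[n]^n$ is a parking function if its weakly increasing rearrangement $(p'_1,\dots,p'_n)$ satisfies $p'_i\le i$ for all $i$. $\pi(p)$ is the permutation obtained by listing, for $s=1,\dots,n$ in turn, the indices $j$ with $p_j=s$ in increasing order, and concatenating. A permutation avoids $\sigma\in\mathfrak S_m$ if none of its length-$m$ subsequences is order-isomorphic to $\sigma$. *)

(* Defs.v *)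
From mathcomp Require Import all_boot.
Set Implicit Arguments. Unset Strict Implicit. Unset Printing Implicit Defensive.

(* Tuples/words are represented as sequences of naturals, with p_i = nth 0 p (i-1). *)

Definition parking_function (n : nat) (p : seq nat) : Prop :=
  size p = n /\ (forall x, x \in p -> 1 <= x <= n) /\
  (forall i, i < n -> nth 0 (sort leq p) i <= i.+1).

(* pi(p): for s = 1..n, list the indices j (1-based) with p_j = s in increasing
   order, and concatenate.  The result is a permutation of [n] in one-line notation. *)
Definition pf_perm (p : seq nat) : seq nat :=
  let n := size p in
  flatten [seq [seq j <- iota 1 n | nth 0 p j.-1 == s] | s <- iota 1 n].

Definition order_iso (s t : seq nat) : Prop :=
  size s = size t /\
  forall i j, i < size s -> j < size s ->
    (nth 0 s i < nth 0 s j) = (nth 0 t i < nth 0 t j).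

Definition contains_pattern (w sigma : seq nat) : Prop :=
  exists s, subseq s w /\ order_iso s sigma.

Definition avoids (w sigma : seq nat) : Prop := ~ contains_pattern w sigma.

Definition has_weak_incr_subseq (w : seq nat) (m : nat) : Prop :=
  exists s, subseq s w /\ size s = m /\ sorted leq s.

(* Main.v *)
Require Import Defs.
From mathcomp Require Import all_boot.
From mathcomp Require Import zify.

Lemma sub_iota_of_sorted (s : seq nat) a m :
  sorted ltn s -> all (fun x => x \in iota a m) s -> subseq s (iota a m).
Proof.
move=> ss hall.
have -> : s = [seq x <- iota a m | x \in s].
  apply: (irr_sorted_eq ltn_trans ltnn) => //.
  - apply: sorted_filter; [exact: ltn_trans | exact: iota_ltn_sorted].
  - move=> x; rewrite mem_filter; case xs: (x \in s) => //=.
    by rewrite (allP hall x xs).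
exact: filter_subseq.
Qed.

Lemma order_iso_iota (s : seq nat) m :
  order_iso s (iota 1 m) <-> (size s = m /\ sorted ltn s).
Proof.
rewrite /order_iso size_iota; split.
- case=> hs h; split=> //. apply/(sortedP 0) => i hi.
  have := h i i.+1 (ltnW hi) hi.
  rewrite !nth_iota -?hs ?(ltnW hi) // addnS ltnSn; exact.
- case=> hs ss; split=> // i j hi hj.
  rewrite !nth_iota -?hs // ltn_add2l.
  case: (ltngtP i j) => [ij|ji|->]; last by rewrite !ltnn.
  + exact: (sorted_ltn_nth ltn_trans 0 ss).
  + apply/negbTE; rewrite -leqNgt; apply: ltnW.
    exact: (sorted_ltn_nth ltn_trans 0 ss).
Qed.

Lemma split_sorted (f : nat -> nat) a (t : seq nat) :
  sorted leq (map f t) -> all (fun j => a <= f j) t ->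
  t = [seq j <- t | f j == a] ++ [seq j <- t | f j != a].
Proof.
elim: t => //= x t IH hs /andP[hx ht].
have hs' : sorted leq (map f t) by exact: (path_sorted hs).
case: (eqVneq (f x) a) => hfx /=.
  by rewrite -IH.
have hall : all (leq (f x)) (map f t) by exact: (order_path_min leq_trans hs).
have hgt : all (fun j => a < f j) t.
  apply/allP => j jt; have := allP hall (f j) (map_f f jt); lia.
rewrite (@eq_in_filter _ _ pred0) ?filter_pred0; last first.
  move=> j jt /=; have := allP hgt j jt; lia.
rewrite (_ : [seq j <- t | f j != a] = t) //.
apply/all_filterP; apply/allP => j jt; have := allP hgt j jt; lia.
Qed.

Lemma blocks (f : nat -> nat) len : forall a (t : seq nat),
  sorted leq (map f t) -> all (fun j => a <= f j < a + len) t ->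
  t = flatten [seq [seq j <- t | f j == v] | v <- iota a len].
Proof.
elim: len => [|len IH] a t hs ha.
  case: t hs ha => //= x t _ /andP[h _]; lia.
rewrite /= {1}(@split_sorted f a t hs); last first.
  by apply/allP => j /(allP ha) /andP[].
congr (_ ++ _).
set t' := [seq j <- t | f j != a].
have hs' : sorted leq (map f t').
  apply: (subseq_sorted leq_trans _ hs); apply: map_subseq; exact: filter_subseq.
have ha' : all (fun j => a.+1 <= f j < a.+1 + len) t'.
  apply/allP => j; rewrite mem_filter => /andP[hj /(allP ha) h]; move: hj h => /eqP; lia.
rewrite {1}(IH a.+1 t' hs' ha').
congr flatten; apply/eq_in_map => v; rewrite mem_iota => hv.
rewrite /t' -filter_predI; apply: eq_in_filter => j _ /=.
case: (eqVneq (f j) v) => //= ->; apply/eqP; lia.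
Qed.

Lemma pairwise_const (v : nat) (xs : seq nat) :
  all (pred1 v) xs -> pairwise leq xs.
Proof.
elim: xs => //= x xs IH /andP[/eqP-> h]; rewrite IH // andbT.
by apply/allP => y /(allP h) /eqP ->.
Qed.

Lemma blocks_sorted (f : nat -> nat) (t : seq nat) (l : seq nat) :
  sorted leq l ->
  sorted leq (map f (flatten [seq [seq j <- t | f j == v] | v <- l])).
Proof.
rewrite !(sorted_pairwise leq_trans).
elim: l => //= v l IH /andP[hv hl].
rewrite map_cat pairwise_cat IH // andbT.
apply/andP; split.
  apply/allrelP => x y /mapP[j]; rewrite mem_filter => /andP[/eqP hj _] ->.
  move=> /mapP[i /flattenP[b /mapP[u ul ->]]]; rewrite mem_filter.
  move=> /andP[/eqP hi _] ->; rewrite hj hi; exact: (allP hv u ul).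
apply: (@pairwise_const v).
by apply/allP => y /mapP[j]; rewrite mem_filter => /andP[/eqP hj _] ->; apply/eqP.
Qed.

Lemma flatten_subseq (g h : nat -> seq nat) (l : seq nat) :
  (forall v, subseq (g v) (h v)) ->
  subseq (flatten (map g l)) (flatten (map h l)).
Proof.
move=> H; elim: l => //= v l IH; exact: cat_subseq.
Qed.

Theorem corollary2p11 (k n : nat) (p : seq nat) :
  1 <= k -> parking_function n p ->
  (avoids (pf_perm p) (iota 1 k.+1) <-> ~ has_weak_incr_subseq p k.+1).
Proof.
move=> _ [hsz [hrange _]].
set f := fun j => nth 0 p j.-1.
have hw : pf_perm p = flatten [seq [seq j <- iota 1 n | f j == v] | v <- iota 1 n].
  by rewrite /pf_perm hsz.
have hp : map f (iota 1 n) = p.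
  apply: (eq_from_nth (x0 := 0)); first by rewrite size_map size_iota hsz.
  move=> i; rewrite size_map size_iota => hi.
  by rewrite (nth_map 0) ?size_iota // nth_iota.
have hfr : forall j, j \in iota 1 n -> 1 <= f j <= n.
  move=> j; rewrite mem_iota => hj; apply: hrange; apply: mem_nth; rewrite hsz; lia.
rewrite /avoids /contains_pattern /has_weak_incr_subseq.
split => H1 H2; apply: H1.
- case: H2 => t [hsub [hsize hsort]].
  case/subseqP: hsub => m hm ht.
  exists (mask m (iota 1 n)); split; last first.
    apply/order_iso_iota; split.
      by rewrite -hsize ht -hp -map_mask size_map.
    exact: (subseq_sorted ltn_trans (mask_subseq _ _) (iota_ltn_sorted 1 n)).
  set s := mask m (iota 1 n).
  have hs : sorted leq (map f s) by rewrite /s map_mask hp -ht.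
  have ha : all (fun j => 1 <= f j < 1 + n) s.
    apply/allP => j /mem_mask jin; have := hfr j jin; lia.
  rewrite hw (@blocks f n 1 s hs ha); apply: flatten_subseq => v.
  rewrite subseq_filter filter_all /=.
  exact: (subseq_trans (filter_subseq _ _) (mask_subseq _ _)).
- case: H2 => s [hsub /order_iso_iota [hsize hsort]].
  exists (map f s); split; last first.
    split; first by rewrite size_map.
    apply: (subseq_sorted leq_trans (map_subseq f hsub)); rewrite hw.
    exact: blocks_sorted (iota_sorted 1 n).
  rewrite -hp; apply: map_subseq; apply: sub_iota_of_sorted => //.
  apply/allP => x /(mem_subseq hsub); rewrite hw => /flattenP [b /mapP [v _ ->]].
  by rewrite mem_filter => /andP[_ ->].
Qed.
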